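(* Let $s\ge1$ and $k\ge0$ be integers with $2s>k$. Then: (a) for all partitions $\lambda,\mu$ with $|\lambda|+|\mu|\le k$, the set $\Lambda^s_{\lambda,\mu}$ is (the diagram of) a partition with $|\Lambda^s_{\lambda,\mu}|=s(2s+1)+2|\lambda|+2|\mu|$ and $\mathrm{cweight}(\Lambda^s_{\lambda,\mu})=s$; (b) the map $(\lambda,\mu)\mapsto\Lambda^s_{\lambda,\mu}$ is a bijection from the set of pairs of partitions with $|\lambda|+|\mu|\le k$ onto the set of partitions $\nu$ with $\mathrm{cweight}(\nu)=s$ and $|\nu|\le s(2s+1)+2k$.
   Context: A partition $\nu=(\nu_1\ge\nu_2\ge\cdots)$ is identified with its diagram $\{(x,y)\in\mathbb Z^2:1\le x\le\ell(\nu),\,1\le y\le\nu_x\}$ (row index $x$, column index $y$); $|\nu|$ is the number of boxes and $\ell(\nu)$ the number of nonzero parts. The box $(x,y)$ has color $x-y\bmod 2\in\mathbb Z/2\mathbb Z$. The cweight of $\nu$ is $\mathrm{cweight}(\nu)=\#\{\text{boxes of color }1\}-\#\{\text{boxes of color }0\}$. For $s\ge1$ let $\Lambda^s=(2s,2s-1,\dots,2,1)$ (so $|\Lambda^s|=s(2s+1)$). For partitions $\lambda,\mu$ let $\Lambda^s_{\lambda,\mu}=\Lambda^s\cup\{(x,\,2s-x+1+t):1\le x\le\ell(\lambda),\,1\le t\le2\lambda_x\}\cup\{(2s-y+1+t,\,y):1\le y\le\ell(\mu),\,1\le t\le 2\mu_y\}$, i.e. $\Lambda^s$ with row $x$ lengthened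 by $2\lambda_x$ boxes and column $y$ lengthened by $2\mu_y$ boxes. *)

(* Defs.v *)
From mathcomp Require Import all_boot all_order all_algebra.
Set Implicit Arguments. Unset Strict Implicit. Unset Printing Implicit Defensive.
Import Order.TTheory GRing.Theory Num.Theory.

Definition is_partition (nu : seq nat) : bool :=
  sorted geq nu && all (fun a => 0 < a) nu.

Definition psize (nu : seq nat) : nat := sumn nu.

(* the i-th part, 1-indexed, for i : int (0 if out of range) *)
Definition part (nu : seq nat) (x : int) : nat := nth 0 nu (absz x).-1.

Local Open Scope ring_scope.

Definition diagram (nu : seq nat) (p : int * int) : bool :=
  let: (x, y) := p in
  [&& 1 <= x, x <= (size nu)%:Z, 1 <= y & y <= (part nu x)%:Z].

(* cweight(nu) = #{boxes of color 1} - #{boxes of color 0};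
   box (i+1, j+1) has color (i+1)-(j+1) = i+j mod 2. *)
Definition cweight (nu : seq nat) : int :=
  \sum_(i < size nu) \sum_(j < nth 0%N nu i)
     (if odd (i + j) then 1 else -1).

Definition Lset (s : nat) (lam mu : seq nat) (p : int * int) : bool :=
  let: (x, y) := p in
  let S := (2 * s)%N%:Z in
  [|| [&& 1 <= x, 1 <= y & x + y <= S + 1]
    , [&& 1 <= x, x <= (size lam)%:Z,
          S - x + 1 < y & y <= S - x + 1 + 2 * (part lam x)%:Z]
    | [&& 1 <= y, y <= (size mu)%:Z,
          S - y + 1 < x & x <= S - y + 1 + 2 * (part mu y)%:Z]
  ].

(* Main.v *)
Require Import Defs.
From mathcomp Require Import all_boot all_order all_algebra.
From mathcomp Require Import zify.
Import Order.TTheory GRing.Theory Num.Theory.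
Set Implicit Arguments. Unset Strict Implicit. Unset Printing Implicit Defensive.

Definition sgn (m : nat) : int := if odd m then 1%R else (-1)%R.
Definition isw (i n : nat) : int := if odd n then sgn i else 0%R.

Lemma ISS a n : (\sum_(j < n) sgn (a + j) = isw a n)%R.
Proof.
elim: n => [|n IH]; first by rewrite big_ord0 /isw.
rewrite big_ord_recr /= IH /isw /sgn oddS oddD.
by case: (odd a); case: (odd n).
Qed.

Lemma IL (R : Type) (idx : R) (op : Monoid.law idx) (F : nat -> R) a n M :
  a + n <= M ->
  \big[op/idx]_(j < M) (if (a <= j) && (j < a + n) then F j else idx)
  = \big[op/idx]_(t < n) F (a + t).
Proof.
move=> H.
rewrite -big_mkcond /= -(big_mkord (fun j => (a <= j) && (j < a + n))).
rewrite (@big_cat_nat _ _ _ a) /=; [|lia|lia].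
rewrite (@big_cat_nat _ _ _ (a + n) a) /=; [|lia|lia].
have E1 : \big[op/idx]_(0 <= i < a | (a <= i) && (i < a + n)) F i = idx.
  rewrite big_nat_cond big_pred0 // => j; case: (ltnP j a) => Hj /=; rewrite ?andbF //.
have E3 : \big[op/idx]_(a + n <= i < M | (a <= i) && (i < a + n)) F i = idx.
  rewrite big_nat_cond big_pred0 // => j; case: (leqP (a + n) j) => Hj /=; rewrite ?andbF //.
rewrite E1 E3 Monoid.mul1m Monoid.mulm1.
rewrite big_nat_cond.
rewrite (eq_bigl (fun j => (a <= j < a + n))); last first.
  move=> j /=; case: (a <= j < a+n) => //=; by rewrite ?andbT.
rewrite -{1}(add0n a) big_addn addKn big_mkord.
apply: eq_big => [i|i _]; [by rewrite leq_addl /= addnC ltn_add2l ltn_ord | by rewrite addnC].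
Qed.

Lemma rowsum (R : Type) (idx : R) (op : Monoid.law idx) (F : nat -> R) n M :
  n <= M ->
  \big[op/idx]_(j < M) (if j < n then F j else idx) = \big[op/idx]_(j < n) F j.
Proof.
move=> H; rewrite -(@IL _ _ op F 0 n M) //; apply: eq_bigr => j _ //.
Qed.

Lemma if3 (R : Type) (idx : R) (op : Monoid.law idx) (a b c : bool) (x : R) :
  ~~ (a && b) -> ~~ (a && c) -> ~~ (b && c) ->
  (if [|| a, b | c] then x else idx) =
  op (op (if a then x else idx) (if b then x else idx)) (if c then x else idx).
Proof.
by case: a; case: b; case: c => //= _ _ _; rewrite ?Monoid.mul1m ?Monoid.mulm1.
Qed.

Definition Q (s i0 j0 : nat) (r q : nat -> nat) (i j : nat) : bool :=
  [|| i + j < 2 * s, (i < i0) && (2 * s - i <= j) && (j < r i)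
    | (j < j0) && (2 * s - j <= i) && (i < q j)].

Lemma partB (R : Type) (idx : R) (op : Monoid.com_law idx) M s i0 (r : nat -> nat)
   (F : nat -> nat -> R) :
  i0 <= M -> i0 <= 2 * s -> (forall i, i < i0 -> 2 * s - i <= r i <= M) ->
  \big[op/idx]_(i < M) \big[op/idx]_(j < M)
     (if (i < i0) && (2 * s - i <= j) && (j < r i) then F i j else idx)
  = \big[op/idx]_(i < i0) \big[op/idx]_(t < r i - (2 * s - i)) F i (2 * s - i + t).
Proof.
move=> H1 H2 H3.
rewrite (eq_bigr (fun i : 'I_M => if i < i0 then
   \big[op/idx]_(t < r i - (2 * s - i)) F i (2 * s - i + t) else idx)).
  exact: (@rowsum _ _ op (fun i => \big[op/idx]_(t < r i - (2 * s - i)) F i (2 * s - i + t)) i0 M H1).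
move=> i _; case: ltnP => Hi /=; last by rewrite big1.
have /andP [Ha Hb] := H3 _ Hi.
rewrite -(@IL _ _ op (F i) (2 * s - i) _ M); last by rewrite subnKC.
by rewrite subnKC.
Qed.

Lemma partA (R : Type) (idx : R) (op : Monoid.law idx) M s (F : nat -> nat -> R) :
  2 * s <= M ->
  \big[op/idx]_(i < M) \big[op/idx]_(j < M) (if i + j < 2 * s then F i j else idx)
  = \big[op/idx]_(i < 2 * s) \big[op/idx]_(j < 2 * s - i) F i j.
Proof.
move=> H.
rewrite (eq_bigr (fun i : 'I_M => if i < 2 * s then
   \big[op/idx]_(j < 2 * s - i) F i j else idx)).
  exact: (@rowsum _ _ op (fun i => \big[op/idx]_(j < 2 * s - i) F i j) (2 * s) M H).
move=> i _; case: ltnP => Hi /=.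
  rewrite -(@rowsum _ _ op (F i) (2 * s - i) M); last lia.
  apply: eq_bigr => j _; congr (if _ then _ else _); lia.
rewrite big1 // => j _; case: ifP => //; lia.
Qed.

Lemma Qsum (R : Type) (idx : R) (op : Monoid.com_law idx) M s i0 j0 (r q : nat -> nat)
   (F : nat -> nat -> R) :
  i0 + j0 <= 2 * s -> 2 * s <= M ->
  (forall i, i < i0 -> 2 * s - i <= r i <= M) ->
  (forall j, j < j0 -> 2 * s - j <= q j <= M) ->
  \big[op/idx]_(i < M) \big[op/idx]_(j < M) (if Q s i0 j0 r q i j then F i j else idx)
  = op (op (\big[op/idx]_(i < 2 * s) \big[op/idx]_(j < 2 * s - i) F i j)
           (\big[op/idx]_(i < i0) \big[op/idx]_(t < r i - (2 * s - i)) F i (2 * s - i + t)))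
       (\big[op/idx]_(j < j0) \big[op/idx]_(t < q j - (2 * s - j)) F (2 * s - j + t) j).
Proof.
move=> H0 HM Hr Hq.
have E : forall i j : nat, (if Q s i0 j0 r q i j then F i j else idx) =
   op (op (if i + j < 2 * s then F i j else idx)
          (if (i < i0) && (2 * s - i <= j) && (j < r i) then F i j else idx))
      (if (j < j0) && (2 * s - j <= i) && (i < q j) then F i j else idx).
  move=> i j; rewrite /Q; apply: if3.
  - apply/negP => /andP [h1 /andP [/andP [h2 h3] h4]]; lia.
  - apply/negP => /andP [h1 /andP [/andP [h2 h3] h4]]; lia.
  - apply/negP => /andP [/andP [/andP [h1 h2] h3] /andP [/andP [h4 h5] h6]]; lia.
rewrite (eq_bigr (fun i : 'I_M => op (op
     (\big[op/idx]_(j < M) (if i + j < 2 * s then F i j else idx))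
     (\big[op/idx]_(j < M) (if (i < i0) && (2 * s - i <= j) && (j < r i) then F i j else idx)))
     (\big[op/idx]_(j < M) (if (j < j0) && (2 * s - j <= i) && (i < q j) then F i j else idx)))).
  rewrite !big_split /=.
  rewrite partA // partB //; [|lia|lia].
  congr (op _ _).
  rewrite exchange_big /=; apply: (@partB _ _ op M s j0 q (fun j i => F i j)) => //; lia.
move=> i _; rewrite -!big_split /=; apply: eq_bigr => j _; exact: E.
Qed.

Lemma sum1n n : \sum_(j < n) 1 = n.
Proof. by rewrite sum_nat_const card_ord muln1. Qed.

Lemma Tsum n : 2 * (\sum_(i < n) (n - i)) = n * n.+1.
Proof.
elim: n => [|n IH]; first by rewrite big_ord0.
rewrite big_ord_recl subn0.
rewrite (eq_bigr (fun i : 'I_n => n - i)); last by move=> i _; rewrite /bump /= subSS.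
rewrite mulnDr IH; nia.
Qed.

Definition U n : int := (\sum_(i < n) isw i (n - i))%R.

Lemma Urec n : U n.+1 = (isw 0 n.+1 - U n)%R.
Proof.
rewrite /U big_ord_recl subn0 -sumrN; congr (_ + _)%R.
apply: eq_bigr => i _; rewrite /bump /= subSS /isw /sgn /=.
by case: (odd (n - i)); case: (odd i).
Qed.

Lemma Ueven s : U (2 * s) = (Posz s) /\ U (2 * s).+1 = (- Posz s.+1)%R.
Proof.
elim: s => [|s [IH1 IH2]]; first by rewrite /U big_ord0 /= big_ord_recl big_ord0.
have -> : 2 * s.+1 = (2 * s).+1.+1 by lia.
rewrite !Urec IH1 /isw /=.
rewrite oddM /= /sgn /=.
split; lia.
Qed.

Definition BC M (P : nat -> nat -> bool) : nat :=
  \sum_(i < M) \sum_(j < M) (if P i j then 1 else 0).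
Definition BS M (P : nat -> nat -> bool) : int :=
  (\sum_(i < M) \sum_(j < M) (if P i j then sgn (i + j) else 0))%R.
Definition oddz (e : nat) : int := if odd e then 1%R else 0%R.

Lemma BC_Q M s i0 j0 (r q : nat -> nat) :
  i0 + j0 <= 2 * s -> 2 * s <= M ->
  (forall i, i < i0 -> 2 * s - i <= r i <= M) ->
  (forall j, j < j0 -> 2 * s - j <= q j <= M) ->
  BC M (Q s i0 j0 r q) = s * (2 * s + 1) + \sum_(i < i0) (r i - (2 * s - i))
      + \sum_(j < j0) (q j - (2 * s - j)).
Proof.
move=> H0 HM Hr Hq.
rewrite /BC (@Qsum _ _ addn M s i0 j0 r q (fun _ _ => 1)) //.
have S1 : forall n, \big[addn/0]_(t < n) 1 = n.
  by elim => [|n IH]; rewrite ?big_ord0 // big_ord_recr /= IH addn1.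
rewrite (eq_bigr (fun i : 'I_(2 * s) => 2 * s - i)); last by move=> i _; exact: S1.
rewrite (eq_bigr (fun i : 'I_i0 => r i - (2 * s - i))); last by move=> i _; exact: S1.
rewrite (eq_bigr (fun j : 'I_j0 => q j - (2 * s - j))); last by move=> i _; exact: S1.
have T := Tsum (2 * s); congr (_ + _ + _).
change (\sum_(i < 2 * s) (2 * s - i) = s * (2 * s + 1)); nia.
Qed.

Lemma BS_Q M s i0 j0 (r q : nat -> nat) :
  i0 + j0 <= 2 * s -> 2 * s <= M ->
  (forall i, i < i0 -> 2 * s - i <= r i <= M) ->
  (forall j, j < j0 -> 2 * s - j <= q j <= M) ->
  BS M (Q s i0 j0 r q) = ((Posz s) - \sum_(i < i0) oddz (r i - (2 * s - i))
      - \sum_(j < j0) oddz (q j - (2 * s - j)))%R.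
Proof.
move=> H0 HM Hr Hq.
rewrite /BS (@Qsum _ _ +%R M s i0 j0 r q (fun i j => sgn (i + j))) //.
match goal with |- _ = ?RHS => change ((\sum_(i < 2 * s) \sum_(j < 2 * s - i) sgn (i + j)) +
   (\sum_(i < i0) \sum_(t < r i - (2 * s - i)) sgn (i + (2 * s - i + t))) +
   (\sum_(j < j0) \sum_(t < q j - (2 * s - j)) sgn (2 * s - j + t + j)) = RHS)%R end.
rewrite (eq_bigr (fun i : 'I_ _ => isw i (2 * s - i))); last first.
  by move=> i _; rewrite ISS.
have [E _] := Ueven s; rewrite /U in E; rewrite E.
rewrite -!sumrN; congr (_ + _ + _)%R.
- apply: eq_bigr => i _.
  rewrite (eq_bigr (fun t : 'I_ _ => sgn (2 * s + t))); last first.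
    move=> t _; congr sgn; have := ltn_ord i; lia.
  rewrite ISS /isw /oddz /sgn oddM /=; by case: ifP.
- apply: eq_bigr => j _.
  rewrite (eq_bigr (fun t : 'I_ _ => sgn (2 * s + t))); last first.
    move=> t _; congr sgn; have := ltn_ord j; lia.
  rewrite ISS /isw /oddz /sgn oddM /=; by case: ifP.
Qed.

Lemma widen_sum (R : Type) (idx : R) (op : Monoid.law idx) (F : nat -> R) n M :
  n <= M -> (forall i, n <= i -> F i = idx) ->
  \big[op/idx]_(i < n) F i = \big[op/idx]_(i < M) F i.
Proof.
move=> H HF; rewrite (big_ord_widen M F H) big_mkcond; apply: eq_bigr => i _.
by case: ltnP => // h; rewrite HF.
Qed.

Lemma cweightE nu : cweight nu = (\sum_(i < size nu) isw i (nth 0%N nu i))%R.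
Proof.
rewrite /cweight; apply: eq_bigr => i _; rewrite -ISS; apply: eq_bigr => j _ //.
Qed.

Lemma psizeE nu : psize nu = \sum_(i < size nu) nth 0 nu i.
Proof. by rewrite /psize sumnE (big_nth 0) big_mkord. Qed.

Lemma BS_mem nu M : size nu <= M -> (forall i, nth 0 nu i <= M) ->
  BS M (fun i j => j < nth 0 nu i) = cweight nu.
Proof.
move=> H1 H2; rewrite cweightE /BS.
rewrite (@widen_sum _ _ +%R (fun i => isw i (nth 0 nu i)) _ M) //; last first.
  by move=> i hi; rewrite nth_default.
apply: eq_bigr => i _.
rewrite (@rowsum _ _ +%R (fun j => sgn (i + j))) //.
by rewrite ISS.
Qed.

Lemma BC_mem nu M : size nu <= M -> (forall i, nth 0 nu i <= M) ->
  BC M (fun i j => j < nth 0 nu i) = psize nu.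
Proof.
move=> H1 H2; rewrite psizeE /BC.
rewrite (@widen_sum _ _ addn (fun i => nth 0 nu i) _ M) //; last first.
  by move=> i hi; rewrite nth_default.
apply: eq_bigr => i _.
rewrite (@rowsum _ _ addn (fun j => 1)) //.
by rewrite sum1n.
Qed.

Lemma geq_trans : transitive geq.
Proof. by move=> a b c h1 h2; apply: leq_trans h2 h1. Qed.

Lemma nth_filter_pos (t : seq nat) i : sorted geq t ->
  nth 0 [seq x <- t | 0 < x] i = nth 0 t i.
Proof.
elim: t i => [|a t IH] i /=; first by [].
move=> Hs; have Ht := path_sorted Hs.
case: (posnP a) => Ha.
  subst a.
  have Hall := order_path_min geq_trans Hs.
  rewrite (@eq_in_filter _ _ pred0); last first.
    move=> x hx /=; move/allP: Hall => /(_ x hx); by case: x {hx}.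
  rewrite filter_pred0 nth_nil.
  case: i => [//|i] /=.
  case: (ltnP i (size t)) => hi; last by rewrite nth_default.
  move/allP: Hall => /(_ _ (mem_nth 0 hi)); by case: (nth 0 t i).
by case: i => [//|i] /=; rewrite IH.
Qed.

Lemma nth_le nu i i' : sorted geq nu -> i <= i' -> nth 0 nu i' <= nth 0 nu i.
Proof.
move=> Hs Hii.
case: (ltnP i' (size nu)) => h; last by rewrite nth_default.
apply: (sorted_leq_nth geq_trans (fun x => leqnn x) 0 Hs) => //=. rewrite unfold_in /=; lia.
Qed.

Definition rowlen M (P : nat -> nat -> bool) i := find (fun j => ~~ P i j) (iota 0 M).

Lemma rowlenP M (P : nat -> nat -> bool) :
  (forall i j j', j' <= j -> P i j -> P i j') ->
  (forall i j, P i j -> j < M) ->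
  forall i j, P i j = (j < rowlen M P i).
Proof.
move=> Hd Hb i j; rewrite /rowlen.
set c := find _ _.
have Hc : c <= M by have := find_size (fun j => ~~ P i j) (iota 0 M); rewrite size_iota.
case: (ltnP j c) => Hj.
  have := before_find 0 Hj; rewrite nth_iota; last lia.
  by rewrite add0n => /negbFE.
apply/negbTE/negP => HP.
have HjM := Hb _ _ HP.
have Hh : has (fun j => ~~ P i j) (iota 0 M) by rewrite has_find size_iota; lia.
have := nth_find 0 Hh; rewrite -/c nth_iota; last lia.
by rewrite add0n (Hd _ _ _ Hj HP).
Qed.

Lemma rowlen_le M (P : nat -> nat -> bool) i : rowlen M P i <= M.
Proof. by have := find_size (fun j => ~~ P i j) (iota 0 M); rewrite size_iota. Qed.

Lemma part_of_pred M (P : nat -> nat -> bool) :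
  (forall i j j', j' <= j -> P i j -> P i j') ->
  (forall i i' j, i' <= i -> P i j -> P i' j) ->
  (forall i j, P i j -> (i < M) && (j < M)) ->
  exists nu, [/\ is_partition nu, (forall i j, (j < nth 0 nu i) = P i j),
     size nu <= M & forall i, nth 0 nu i <= M].
Proof.
move=> Hdj Hdi Hb.
have HbM : forall i j, P i j -> j < M by move=> i j /Hb /andP [].
have Hmono : forall x y, x <= y -> rowlen M P y <= rowlen M P x.
  move=> x y hxy; rewrite leqNgt; apply/negP => hlt.
  have : P y (rowlen M P x) by rewrite (rowlenP Hdj HbM).
  move/(Hdi _ _ _ hxy); rewrite (rowlenP Hdj HbM); by rewrite ltnn.
set s := [seq rowlen M P i | i <- iota 0 M].
have Hs : sorted geq s.
  apply: (homo_sorted (e := leq)); last exact: iota_sorted.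
  by move=> x y; apply: Hmono.
have Hnth : forall i, nth 0 [seq x <- s | 0 < x] i = rowlen M P i.
  move=> i; rewrite nth_filter_pos //.
  case: (ltnP i M) => hi.
    by rewrite (nth_map 0) ?size_iota // nth_iota.
  rewrite nth_default ?size_map ?size_iota //.
  apply/esym/eqP; rewrite -leqn0 leqNgt; apply/negP => h.
  have : P i 0 by rewrite (rowlenP Hdj HbM).
  move/Hb/andP => [h1 _]; lia.
exists [seq x <- s | 0 < x]; split.
- by rewrite /is_partition sorted_filter ?filter_all //; exact: geq_trans.
- by move=> i j; rewrite Hnth -(rowlenP Hdj HbM).
- by rewrite size_filter (leq_trans (count_size _ _)) // size_map size_iota.
- by move=> i; rewrite Hnth rowlen_le.
Qed.

Definition L0 s (lam mu : seq nat) :=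
  Q s (size lam) (size mu) (fun i => 2 * s - i + 2 * nth 0 lam i)
    (fun j => 2 * s - j + 2 * nth 0 mu j).

Lemma diag_pt nu i j : diagram nu (Posz i.+1, Posz j.+1) = (j < nth 0 nu i).
Proof.
rewrite /diagram /part /=.
case: (ltnP i (size nu)) => h; last first.
  rewrite nth_default //; apply/negbTE/negP => /andP [h1 h2]; lia.
apply/idP/idP.
  move=> /andP [h1 h2]; lia.
move=> h'; apply/andP; split; lia.
Qed.

Ltac splitH := repeat match goal with
 | H : is_true (_ && _) |- _ => let H1 := fresh "H" in let H2 := fresh "H" in case/andP: H => H1 H2
 end.
Ltac bool_lia := apply/idP/idP => ?; splitH; repeat (apply/andP; split); lia.

Lemma Lset_pt s lam mu i j : size lam <= 2 * s -> size mu <= 2 * s ->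
  Lset s lam mu (Posz i.+1, Posz j.+1) = L0 s lam mu i j.
Proof.
move=> Hl Hm; rewrite /Lset /L0 /Q /part /=.
congr [|| _, _ | _]; bool_lia.
Qed.

Lemma diag_eq_Lset nu s lam mu : size lam <= 2 * s -> size mu <= 2 * s ->
  (forall i j, (j < nth 0 nu i) = L0 s lam mu i j) ->
  forall p, diagram nu p = Lset s lam mu p.
Proof.
move=> Hl Hm H [x y].
case: x => [[|i]|n]; case: y => [[|j]|m]; try by rewrite diag_pt Lset_pt.
all: rewrite /diagram /Lset; transitivity false; [apply/negbTE/negP => H0; splitH; lia | apply/esym/negbTE/negP => H0; case/or3P: H0 => H0; splitH; lia].
Qed.

Lemma BC_ext M (P P' : nat -> nat -> bool) : (forall i j, P i j = P' i j) -> BC M P = BC M P'.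
Proof. by move=> H; apply: eq_bigr => i _; apply: eq_bigr => j _; rewrite H. Qed.
Lemma BS_ext M (P P' : nat -> nat -> bool) : (forall i j, P i j = P' i j) -> BS M P = BS M P'.
Proof. by move=> H; apply: eq_bigr => i _; apply: eq_bigr => j _; rewrite H. Qed.

Lemma nth_le_sumn (t : seq nat) i : nth 0 t i <= sumn t.
Proof.
elim: t i => [|a t IH] [|i] //=; first by rewrite leq_addr.
by rewrite (leq_trans (IH i)) // leq_addl.
Qed.

Lemma size_le_psize t : all (fun a => 0 < a) t -> size t <= psize t.
Proof.
rewrite /psize; elim: t => [|a t IH] //= /andP [h1 h2].
by have := IH h2; lia.
Qed.

Lemma sum2 (t : seq nat) : \sum_(i < size t) (2 * nth 0 t i) = 2 * psize t.
Proof. by rewrite -big_distrr /= psizeE. Qed.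

Lemma partA_main s lam mu : is_partition lam -> is_partition mu ->
  size lam + size mu <= 2 * s ->
  exists nu : seq nat,
       [/\ is_partition nu,
           (forall p, diagram nu p = Lset s lam mu p),
           psize nu = (s * (2 * s + 1) + 2 * psize lam + 2 * psize mu)%N
         & cweight nu = Posz s].
Proof.
move=> /andP [Hls Hlp] /andP [Hms Hmp] Hsz.
set M := 2 * s + 2 * (psize lam + psize mu) + 1.
have nl := nth_le Hls; have nm := nth_le Hms.
have sl := nth_le_sumn lam; have sm := nth_le_sumn mu.
rewrite /psize in sl sm.
have [nu [Hnu Hmem Hsize Hnth]] : exists nu, [/\ is_partition nu,
   (forall i j, (j < nth 0 nu i) = L0 s lam mu i j), size nu <= M & forall i, nth 0 nu i <= M].
  apply: part_of_pred.
  - move=> i j j' hj; rewrite /L0 /Q => /or3P [h|h|h]; splitH.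
    + apply/orP; left; lia.
    + case: (ltnP (i + j') (2 * s)) => h'; first by apply/orP; left.
      apply/or3P; apply: Or32; repeat (apply/andP; split); lia.
    + case: (ltnP (i + j') (2 * s)) => h'; first by apply/orP; left.
      have := nm _ _ hj.
      move=> hh; apply/or3P; apply: Or33; repeat (apply/andP; split); lia.
  - move=> i i' j hi; rewrite /L0 /Q => /or3P [h|h|h]; splitH.
    + apply/orP; left; lia.
    + case: (ltnP (i' + j) (2 * s)) => h'; first by apply/orP; left.
      have := nl _ _ hi.
      move=> hh; apply/or3P; apply: Or32; repeat (apply/andP; split); lia.
    + case: (ltnP (i' + j) (2 * s)) => h'; first by apply/orP; left.
      apply/or3P; apply: Or33; repeat (apply/andP; split); lia.
  - move=> i j; rewrite /L0 /Q => /or3P [h|h|h]; splitH.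
    + rewrite /M; apply/andP; split; lia.
    + have := sl i; move=> hh; rewrite /M /psize; apply/andP; split; lia.
    + have := sm j; move=> hh; rewrite /M /psize; apply/andP; split; lia.
have Hl2 : size lam <= 2 * s by lia.
have Hm2 : size mu <= 2 * s by lia.
exists nu; split => //.
- exact: diag_eq_Lset.
- rewrite -(BC_mem Hsize Hnth) (BC_ext M Hmem) /L0 BC_Q //; last first.
  + move=> j hj; have := sm j; rewrite /M /psize; lia.
  + move=> i hi; have := sl i; rewrite /M /psize; lia.
  + rewrite /M; lia.
  rewrite (eq_bigr (fun i : 'I_(size lam) => 2 * nth 0 lam i)); last by move=> i _; lia.
  rewrite (eq_bigr (fun i : 'I_(size mu) => 2 * nth 0 mu i)); last by move=> i _; lia.
  by rewrite !sum2.
- rewrite -(BS_mem Hsize Hnth) (BS_ext M Hmem) /L0 BS_Q //; last first.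
  + move=> j hj; have := sm j; rewrite /M /psize; lia.
  + move=> i hi; have := sl i; rewrite /M /psize; lia.
  + rewrite /M; lia.
  rewrite !big1 ?subr0 // => i _; rewrite /oddz; case: ifP => //; rewrite addKn oddM //.
Qed.

Lemma L0_sym s lam mu i j : L0 s lam mu i j = L0 s mu lam j i.
Proof. by rewrite /L0 /Q addnC; case: (_ < _); case: (_ && _); case: (_ && _). Qed.

Lemma nth_pos (t : seq nat) i : all (fun a => 0 < a) t -> i < size t -> 0 < nth 0 t i.
Proof. by move=> /allP H hi; apply: H; apply: mem_nth. Qed.

Lemma inj_size s lam mu lam' mu' :
  all (fun a => 0 < a) lam' ->
  size lam + size mu < 2 * s ->
  (forall i j, L0 s lam mu i j = L0 s lam' mu' i j) ->
  ~ (size lam < size lam').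
Proof.
move=> Hp Hs HL Hlt.
have E := HL (size lam) (2 * s - size lam).
have hpos := nth_pos Hp Hlt.
have h1 : L0 s lam' mu' (size lam) (2 * s - size lam).
  rewrite /L0 /Q; apply/or3P; apply: Or32; rewrite Hlt leqnn /=. 
  lia.
have h2 : ~~ L0 s lam mu (size lam) (2 * s - size lam).
  clear E h1 HL; rewrite /L0 /Q; apply/negP => /or3P [h|h|h]; splitH; lia.
by rewrite E h1 in h2.
Qed.

Lemma inj_nth s lam mu lam' mu' i :
  size lam + size mu < 2 * s -> i < size lam -> i < size lam' ->
  (forall i j, L0 s lam mu i j = L0 s lam' mu' i j) ->
  ~ (nth 0 lam i < nth 0 lam' i).
Proof.
move=> Hs Hi Hi' HL Hlt.
set j := 2 * s - i + 2 * nth 0 lam i.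
have E := HL i j.
have h1 : L0 s lam' mu' i j.
  rewrite /L0 /Q; apply/or3P; apply: Or32; rewrite Hi' /=; apply/andP; split; rewrite /j; lia.
have h2 : ~~ L0 s lam mu i j.
  clear E h1 HL; rewrite /L0 /Q /j; apply/negP => /or3P [h|h|h]; splitH; lia.
by rewrite E h1 in h2.
Qed.

Lemma inj_lam s lam mu lam' mu' :
  is_partition lam -> is_partition lam' ->
  size lam + size mu < 2 * s -> size lam' + size mu' < 2 * s ->
  (forall i j, L0 s lam mu i j = L0 s lam' mu' i j) -> lam = lam'.
Proof.
move=> /andP [_ Hp] /andP [_ Hp'] Hs Hs' HL.
have Esz : size lam = size lam'.
  apply/eqP; rewrite eqn_leq; apply/andP; split; rewrite leqNgt; apply/negP.
  - by apply: (inj_size Hp Hs' (fun i j => esym (HL i j))).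
  - by apply: (inj_size Hp' Hs HL).
apply: (eq_from_nth (x0 := 0)) => // i hi.
have hi' : i < size lam' by rewrite -Esz.
apply/eqP; rewrite eqn_leq; apply/andP; split; rewrite leqNgt; apply/negP.
- by apply: (inj_nth Hs' hi' hi (fun i j => esym (HL i j))).
- by apply: (inj_nth Hs hi hi' HL).
Qed.

Definition cwS (t : seq nat) : int := (\sum_(i < size t) isw i (nth 0%N t i))%R.

Lemma cwS_cons2 a b t : cwS [:: a, b & t] = (isw 0 a + isw 1 b + cwS t)%R.
Proof.
rewrite /cwS /= !big_ord_recl /= -addrA; congr (_ + (_ + _))%R.
apply: eq_bigr => i _; rewrite /isw /sgn /bump /= !add0n negbK //.
Qed.

Lemma cwS_le1 a : (cwS [:: a] <= 0)%R.
Proof. by rewrite /cwS /= big_ord_recl big_ord0 /isw /sgn /=; case: (odd a). Qed.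

Lemma contain n : forall t, size t <= n -> is_partition t ->
  forall s, (Posz s <= cwS t)%R -> forall i, i < 2 * s -> 2 * s - i <= nth 0 t i.
Proof.
elim: n => [|n IH] t.
  rewrite leqn0 => /nilP -> _ s; rewrite /cwS big_ord0 => hs i hi; lia.
case: t => [|a [|b t]] hsz hp s hs.
- by move: hs; rewrite /cwS big_ord0; lia.
- by move: (le_trans hs (cwS_le1 a)); lia.
move: hp => /andP [hsort hpos].
have hab : b <= a by move: hsort => /= /andP [].
have hsort' : sorted geq t by move: hsort => /= /andP [_ /path_sorted].
have hbt : nth 0 t 0 <= b.
  move: hsort => /= /andP [_]; case: t {hsz hsort' hs hpos} => [|c t] //= /andP [] //.
have hpos' : all (fun a => 0 < a) t by move: hpos => /= /and3P [].
have hb1 : 0 < b by move: hpos => /= /and3P [].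
have hpt : is_partition t by rewrite /is_partition hsort' hpos'.
have hszt : size t <= n by move: hsz => /=; lia.
move: hs; rewrite cwS_cons2.
case hoa : (odd a); case hob : (odd b); rewrite /isw /sgn hoa hob /= => hs.
-
  have hs' : (Posz s <= cwS t)%R by lia.
  have := IH t hszt hpt s hs'.
  move=> H i hi.
  case: s hs hs' H hi => [|s] // hs hs' H hi.
  have h0 := H 0 ltac:(lia).
  case: i hi => [|[|i]] hi /=; first lia; first lia.
  have := H i ltac:(lia); lia.
- have hs' : (Posz s <= cwS t)%R by lia.
  have := IH t hszt hpt s hs'.
  move=> H i hi.
  case: s hs hs' H hi => [|s] // hs hs' H hi.
  have h0 := H 0 ltac:(lia).
  case: i hi => [|[|i]] hi /=; first lia; first lia.
  have := H i ltac:(lia); lia.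
- (* a even, b odd : +1 *)
  case: s hs => [|s] hs i hi; first lia.
  have hs' : (Posz s <= cwS t)%R by lia.
  have H := IH t hszt hpt s hs'.
  have hb : 2 * s.+1 - 1 <= b.
    case: s hs hi hs' H => [|s] hs hi hs' H; first lia.
    have := H 0 ltac:(lia).
    have : b != 2 * s.+1 by apply/eqP => E; rewrite E oddM in hob.
    lia.
  have ha : a != b by apply/eqP => E; rewrite E hob in hoa.
  case: i hi => [|[|i]] hi /=; first lia; first lia.
  have := H i ltac:(lia); lia.
- have hs' : (Posz s <= cwS t)%R by lia.
  have := IH t hszt hpt s hs'.
  move=> H i hi.
  case: s hs hs' H hi => [|s] // hs hs' H hi.
  have h0 := H 0 ltac:(lia).
  case: i hi => [|[|i]] hi /=; first lia; first lia.
  have := H i ltac:(lia); lia.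
Qed.

Lemma Posz_sum n (f : nat -> nat) : Posz (\sum_(i < n) f i) = (\sum_(i < n) Posz (f i))%R.
Proof.
elim: n => [|n IH]; first by rewrite !big_ord0.
by rewrite !big_ord_recr /= PoszD IH.
Qed.

Lemma isw_step i n m : m <= n -> (isw i n + Posz m <= isw i m + Posz n)%R.
Proof.
move=> h; case: (eqVneq n m) => [->|hne]; first lia.
rewrite /isw /sgn; case: (odd n); case: (odd m); case: (odd i); lia.
Qed.

Lemma gap nu s k : is_partition nu -> cwS nu = Posz s ->
  psize nu <= s * (2 * s + 1) + 2 * k -> k < 2 * s ->
  exists i0, i0 <= 2 * s /\ nth 0 nu i0 <= 2 * s - i0.
Proof.
move=> hp hcw hsz hk.
case hh : (has (fun i => nth 0 nu i <= 2 * s - i) (iota 0 (2 * s).+1)).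
  move/hasP: hh => [i0 hi0 h]; exists i0; split => //.
  by move: hi0; rewrite mem_iota; lia.
exfalso.
have Hall : forall i, i <= 2 * s -> 2 * s - i < nth 0 nu i.
  move=> i hi; move/negbT/hasPn: hh => /(_ i); rewrite mem_iota => /(_ ltac:(lia)).
  by rewrite -ltnNge.
have hM : (2 * s).+1 <= size nu.
  have := Hall (2 * s) (leqnn _); rewrite ltnNge; apply: contraR; rewrite -ltnNge => hlt.
  by rewrite nth_default.
have step : (cwS nu + \sum_(i < size nu) Posz ((2 * s).+1 - i) <= \sum_(i < size nu) isw i ((2 * s).+1 - i) + \sum_(i < size nu) Posz (nth 0%N nu i))%R.
  rewrite /cwS -!big_split /=; apply: ler_sum => i _; apply: isw_step.
  case: (leqP i (2 * s)) => hi; last lia.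
  have := Hall i hi; lia.
have E1 : (\sum_(i < size nu) isw i ((2 * s).+1 - i))%R = U (2 * s).+1.
  rewrite /U; symmetry; apply: (@widen_sum _ _ +%R (fun i => isw i ((2 * s).+1 - i)) _ _ hM) => i0 hi; rewrite /isw (_ : (2 * s).+1 - i0 = 0) //; lia.
have E2 : (\sum_(i < size nu) Posz ((2 * s).+1 - i))%R = Posz (\sum_(i < (2 * s).+1) ((2 * s).+1 - i)).
  rewrite Posz_sum; symmetry; apply: (@widen_sum _ _ +%R (fun i => Posz ((2 * s).+1 - i)) _ _ hM) => i0 hi; rewrite (_ : (2 * s).+1 - i0 = 0) //; lia.
have E3 : (\sum_(i < size nu) Posz (nth 0%N nu i))%R = Posz (psize nu) by rewrite psizeE Posz_sum.
rewrite E1 E2 E3 hcw in step.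
have [_ U1] := Ueven s.
rewrite U1 in step.
have T1 := Tsum (2 * s).+1.
move: step T1; move: (\sum_(i < _) _) => T step T1.
nia.
Qed.

Definition col (nu : seq nat) j := count (fun a => j < a) nu.

Lemma colP nu j i : sorted geq nu -> (i < col nu j) = (j < nth 0 nu i).
Proof.
elim: nu i => [|a t IH] i /=; first by rewrite nth_nil ltn0.
move=> hs; have hs' := path_sorted hs.
have hall := order_path_min geq_trans hs.
case: (ltnP j a) => hja /=.
  case: i => [|i] //=; by rewrite ltnS IH.
have -> : col t j = 0.
  apply/eqP; rewrite -leqn0 leqNgt -has_count; apply/hasPn => x hx /=.
  move/allP: hall => /(_ x hx) /= hx'; lia.
case: i => [|i] /=; first lia.
case: (ltnP i (size t)) => hi; last by rewrite nth_default.
move/allP: hall => /(_ _ (mem_nth 0 hi)) /= h; lia.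
Qed.

Lemma BC_L0 s lam mu M : is_partition lam -> is_partition mu ->
  size lam + size mu <= 2 * s -> 2 * s + 2 * (psize lam + psize mu) + 1 <= M ->
  BC M (L0 s lam mu) = s * (2 * s + 1) + 2 * psize lam + 2 * psize mu.
Proof.
move=> /andP [Hls Hlp] /andP [Hms Hmp] Hsz HM.
have sl := nth_le_sumn lam; have sm := nth_le_sumn mu.
rewrite /psize in sl sm HM.
rewrite /L0 BC_Q //; last first.
+ move=> j hj; have := sm j; lia.
+ move=> i hi; have := sl i; lia.
+ lia.
rewrite (eq_bigr (fun i : 'I_(size lam) => 2 * nth 0 lam i)); last by move=> i _; lia.
rewrite (eq_bigr (fun i : 'I_(size mu) => 2 * nth 0 mu i)); last by move=> i _; lia.
by rewrite !sum2.
Qed.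

Lemma mono_from_step (g : nat -> nat) n : (forall i, i.+1 < n -> g i.+1 <= g i) ->
  forall x y, x <= y -> y < n -> g y <= g x.
Proof.
move=> H x; elim=> [|y IH] hxy hy.
  by have -> : x = 0 by lia.
case: (eqVneq x y.+1) => [->//|hne].
apply: leq_trans (H y hy) (IH _ _); lia.
Qed.

Lemma sorted_map_iota (g : nat -> nat) n : (forall i, i.+1 < n -> g i.+1 <= g i) ->
  sorted geq [seq g i | i <- iota 0 n].
Proof.
move=> H.
apply: (homo_sorted_in (P := fun i => i < n) (e := leq)); last exact: iota_sorted.
  move=> x y hx hy hxy /=; exact: (mono_from_step H hxy hy).
by apply/allP => x; rewrite mem_iota.
Qed.

Lemma nth_mk (g : nat -> nat) n i : (forall i, i.+1 < n -> g i.+1 <= g i) ->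
  nth 0 [seq x <- [seq g i | i <- iota 0 n] | 0 < x] i = if i < n then g i else 0.
Proof.
move=> H; rewrite nth_filter_pos; last exact: sorted_map_iota.
case: ltnP => hi; first by rewrite (nth_map 0) ?size_iota // nth_iota.
by rewrite nth_default // size_map size_iota.
Qed.

Lemma part_mk (g : nat -> nat) n : (forall i, i.+1 < n -> g i.+1 <= g i) ->
  is_partition [seq x <- [seq g i | i <- iota 0 n] | 0 < x] /\
  size [seq x <- [seq g i | i <- iota 0 n] | 0 < x] <= n.
Proof.
move=> H; split.
  by rewrite /is_partition sorted_filter ?filter_all //; [exact: geq_trans | exact: sorted_map_iota].
by rewrite size_filter (leq_trans (count_size _ _)) // size_map size_iota.
Qed.

Lemma col_le nu j : col nu j <= size nu.
Proof. exact: count_size. Qed.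

Lemma col_mono nu j j' : j <= j' -> col nu j' <= col nu j.
Proof. move=> h; apply: sub_count => x /=; lia. Qed.

Lemma surj_main s k nu : k < 2 * s -> is_partition nu -> cweight nu = Posz s ->
  psize nu <= s * (2 * s + 1) + 2 * k ->
  exists lam mu : seq nat,
       [/\ is_partition lam, is_partition mu, (psize lam + psize mu <= k)%N
         & forall p, diagram nu p = Lset s lam mu p].
Proof.
move=> hk hp hcw hsz.
have hcw' : cwS nu = Posz s by rewrite -hcw cweightE.
have Hc := contain (leqnn (size nu)) hp (s := s) (ltac:(by rewrite hcw')).
move: (hp) => /andP [hsort hpos].
have [i0 [hi0 hg]] := gap hp hcw' hsz hk.
set j0 := 2 * s - i0.
have hnl := nth_le hsort.
have hsl := nth_le_sumn nu.
have HQ : forall i j, (j < nth 0 nu i) = Q s i0 j0 (nth 0 nu) (col nu) i j.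
  move=> i j; rewrite /Q; apply/idP/idP.
  - move=> h; case: (ltnP (i + j) (2 * s)) => h1; first by apply/orP; left.
    case: (ltnP i i0) => h2.
      apply/or3P; apply: Or32; repeat (apply/andP; split) => //; lia.
    have h3 := hnl _ _ h2.
    apply/or3P; apply: Or33; rewrite colP // h /=; repeat (apply/andP; split) => //; rewrite /j0; lia.
  - move=> /or3P [h|h|h]; splitH.
    + have := Hc i ltac:(lia); lia.
    + done.
    + by rewrite -colP.
pose M := 2 * s + size nu + psize nu.
have hM1 : 2 * s <= M by rewrite /M; lia.
have Hr : forall i, i < i0 -> 2 * s - i <= nth 0 nu i <= M.
  move=> i hi; have := Hc i ltac:(lia); have := hsl i; rewrite /M /psize; lia.
have Hq : forall j, j < j0 -> 2 * s - j <= col nu j <= M.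
  move=> j hj; apply/andP; split; last by have := col_le nu j; rewrite /M; lia.
  have := Hc (2 * s - j - 1) ltac:(rewrite /j0 in hj; lia).
  move=> h; have : 2 * s - j - 1 < col nu j by rewrite colP //; lia.
  lia.
have hij : i0 + j0 <= 2 * s by rewrite /j0; lia.
have hBS := BS_Q hij hM1 Hr Hq.
rewrite -(BS_ext M HQ) BS_mem in hBS; last first.
  by move=> i; have := hsl i; rewrite /M /psize; lia.
  by rewrite /M; lia.
rewrite hcw in hBS.
have hA : (0 <= \sum_(i < i0) oddz (nth 0 nu i - (2 * s - i)))%R.
  by apply: sumr_ge0 => i _; rewrite /oddz; case: ifP.
have hB : (0 <= \sum_(j < j0) oddz (col nu j - (2 * s - j)))%R.
  by apply: sumr_ge0 => i _; rewrite /oddz; case: ifP.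
have hA0 : (\sum_(i < i0) oddz (nth 0 nu i - (2 * s - i)))%R = 0%R.
  move: hBS hA hB; set A := (\sum_(i < i0) _)%R; set B := (\sum_(j < j0) _)%R; lia.
have hB0 : (\sum_(j < j0) oddz (col nu j - (2 * s - j)))%R = 0%R.
  move: hBS hA hB; set A := (\sum_(i < i0) _)%R; set B := (\sum_(j < j0) _)%R; lia.
have evA : forall i, i < i0 -> (nth 0 nu i - (2 * s - i)) %% 2 = 0.
  move=> i hi.
  have H0 : forall i1 : 'I_i0, true -> (0 <= oddz (nth 0%N nu i1 - (2 * s - i1)))%R.
    by move=> ? _; rewrite /oddz; case: ifP.
  have := psumr_eq0P H0 hA0 (i := Ordinal hi) isT; rewrite /oddz /= modn2; by case: ifP.
have evB : forall j, j < j0 -> (col nu j - (2 * s - j)) %% 2 = 0.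
  move=> j hj.
  have H0 : forall i1 : 'I_j0, true -> (0 <= oddz (col nu i1 - (2 * s - i1)))%R.
    by move=> ? _; rewrite /oddz; case: ifP.
  have := psumr_eq0P H0 hB0 (i := Ordinal hj) isT; rewrite /oddz /= modn2; by case: ifP.
have stepl : forall i, i.+1 < i0 ->
   (nth 0 nu i.+1 - (2 * s - i.+1)) %/ 2 <= (nth 0 nu i - (2 * s - i)) %/ 2.
  move=> i hi; have := hnl i i.+1 (leqnSn i); have := evA i ltac:(lia);
  have := evA i.+1 hi; have := Hr i ltac:(lia); have := Hr i.+1 hi; lia.
have stepm : forall j, j.+1 < j0 ->
   (col nu j.+1 - (2 * s - j.+1)) %/ 2 <= (col nu j - (2 * s - j)) %/ 2.
  move=> j hj; have := col_mono nu (leqnSn j); have := evB j ltac:(lia);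
  have := evB j.+1 hj; have := Hq j ltac:(lia); have := Hq j.+1 hj; lia.
have [hlp hls] := @part_mk (fun i => (nth 0 nu i - (2 * s - i)) %/ 2) i0 stepl.
have [hmp hms] := @part_mk (fun j => (col nu j - (2 * s - j)) %/ 2) j0 stepm.
have hln := @nth_mk (fun i => (nth 0 nu i - (2 * s - i)) %/ 2) i0 ^~ stepl.
have hmn := @nth_mk (fun j => (col nu j - (2 * s - j)) %/ 2) j0 ^~ stepm.
move: hlp hls hln hmp hms hmn.
set lam := [seq x <- _ | 0 < x].
set mu := [seq x <- _ | 0 < x].
move=> hlp hls hln hmp hms hmn.
have hl0 : forall i, 0 < nth 0 lam i -> i < size lam.
  by move=> i; apply: contraLR; rewrite -!leqNgt => h; rewrite nth_default.
have hm0 : forall i, 0 < nth 0 mu i -> i < size mu.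
  by move=> i; apply: contraLR; rewrite -!leqNgt => h; rewrite nth_default.
have KEY : forall i j, Q s i0 j0 (nth 0 nu) (col nu) i j = L0 s lam mu i j.
  move=> i j; rewrite /L0 /Q; congr [|| _, _ | _].
  - have h1 := hln i; have h2 := hl0 i.
    move: h1; case: (ltnP i i0) => hi h1.
      have := evA i hi; have := Hr i hi.
      move=> *; apply/idP/idP => ?; splitH; repeat (apply/andP; split); lia.
    move=> *; apply/idP/idP => ?; splitH; repeat (apply/andP; split); lia.
  - have h1 := hmn j; have h2 := hm0 j.
    move: h1; case: (ltnP j j0) => hj h1.
      have := evB j hj; have := Hq j hj.
      move=> *; apply/idP/idP => ?; splitH; repeat (apply/andP; split); lia.
    move=> *; apply/idP/idP => ?; splitH; repeat (apply/andP; split); lia.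
have Hmem : forall i j, (j < nth 0 nu i) = L0 s lam mu i j by move=> i j; rewrite HQ KEY.
have hszs : size lam + size mu <= 2 * s by rewrite /j0 in hms; lia.
exists lam, mu; split => //; last first.
  apply: diag_eq_Lset => //; lia.
have hM2 : 2 * s + 2 * (psize lam + psize mu) + 1 <=
   2 * s + 2 * (psize lam + psize mu) + 1 + size nu + psize nu by lia.
have E := BC_L0 hlp hmp hszs hM2.
rewrite -(BC_ext _ Hmem) BC_mem in E.
- move: E hsz; nia.
- lia.
- by move=> i; have := hsl i; rewrite /psize; lia.
Qed.

Local Open Scope ring_scope.

Theorem lemma4p1 (s k : nat) (hs : (1 <= s)%N) (hsk : (k < 2 * s)%N) :
  (* (a) *)
  (forall lam mu : seq nat, is_partition lam -> is_partition mu ->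
     (psize lam + psize mu <= k)%N ->
     exists nu : seq nat,
       [/\ is_partition nu,
           (forall p, diagram nu p = Lset s lam mu p),
           psize nu = (s * (2 * s + 1) + 2 * psize lam + 2 * psize mu)%N
         & cweight nu = s%:Z]) /\
  (* (b) injectivity *)
  (forall lam mu lam' mu' : seq nat,
     is_partition lam -> is_partition mu -> (psize lam + psize mu <= k)%N ->
     is_partition lam' -> is_partition mu' -> (psize lam' + psize mu' <= k)%N ->
     (forall p, Lset s lam mu p = Lset s lam' mu' p) ->
     lam = lam' /\ mu = mu') /\
  (* (b) surjectivity onto {nu : cweight nu = s, |nu| <= s(2s+1)+2k} *)
  (forall nu : seq nat, is_partition nu -> cweight nu = s%:Z ->
     (psize nu <= s * (2 * s + 1) + 2 * k)%N ->
     exists lam mu : seq nat,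
       [/\ is_partition lam, is_partition mu, (psize lam + psize mu <= k)%N
         & forall p, diagram nu p = Lset s lam mu p]).
Proof.
split; [|split].
- move=> lam mu hl hm hk'; apply: partA_main => //.
  have h1 := size_le_psize (proj2 (andP hl)); have h2 := size_le_psize (proj2 (andP hm)).
  clear hl hm; lia.
- move=> lam mu lam' mu' hl hm hk1 hl' hm' hk2 HL.
  have s1 := size_le_psize (proj2 (andP hl)); have s2 := size_le_psize (proj2 (andP hm)).
  have s3 := size_le_psize (proj2 (andP hl')); have s4 := size_le_psize (proj2 (andP hm')).
  have a1 : (size lam + size mu < 2 * s)%N by clear hl hm hl' hm' HL; lia.
  have a2 : (size lam' + size mu' < 2 * s)%N by clear hl hm hl' hm' HL; lia.
  have a3 : (size mu + size lam < 2 * s)%N by clear hl hm hl' hm' HL; lia.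
  have a4 : (size mu' + size lam' < 2 * s)%N by clear hl hm hl' hm' HL; lia.
  have b1 : (size lam <= 2 * s)%N by clear hl hm hl' hm' HL; lia.
  have b2 : (size mu <= 2 * s)%N by clear hl hm hl' hm' HL; lia.
  have b3 : (size lam' <= 2 * s)%N by clear hl hm hl' hm' HL; lia.
  have b4 : (size mu' <= 2 * s)%N by clear hl hm hl' hm' HL; lia.
  have HL0 : forall i j, L0 s lam mu i j = L0 s lam' mu' i j.
    by move=> i j; rewrite -Lset_pt // -Lset_pt //; exact: HL.
  split; first exact: (inj_lam hl hl' a1 a2 HL0).
  apply: (inj_lam hm hm' a3 a4).
  by move=> i j; rewrite (L0_sym s mu lam i j) (L0_sym s mu' lam' i j); exact: HL0.
- move=> nu hp hcw hsz; exact: surj_main.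
Qed.
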